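(* Let $\Gamma$ be a cubic ($3$-regular) finite connected undirected graph with girth $g(\Gamma)\ge5$, and let $(u_{ij})$ be the generators of $C(G_{aut}^+(\Gamma))$. Then $u_{ij}u_{kl}=u_{kl}u_{ij}$ for all vertices $i,j,k,l$ with $d(i,k)=2=d(j,l)$.
   Context: $d$ is the graph distance; the girth is the length of a shortest cycle. For a finite simple undirected graph $\Gamma=(V,E)$ with $V=\{1,\dots,n\}$, $C(G_{aut}^+(\Gamma))$ is the universal unital $C^*$-algebra generated by $u_{ij}$, $1\le i,j\le n$, with relations: (R1) $u_{ij}=u_{ij}^*=u_{ij}^2$; (R2) $\sum_{l} u_{il}=1=\sum_{l} u_{li}$ for all $i$; (R3) $u_{ij}u_{kl}=u_{kl}u_{ij}=0$ whenever exactly one of $(i,k)\in E$, $(j,l)\in E$ holds. *)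

(* Defs.v *)
From Stdlib Require Import Reals List Arith.
Import ListNotations.
Open Scope R_scope.

Definition Cpx : Type := (R * R)%type.
Definition Cadd (a b : Cpx) : Cpx := (fst a + fst b, snd a + snd b).
Definition Cmul (a b : Cpx) : Cpx :=
  (fst a * fst b - snd a * snd b, fst a * snd b + snd a * fst b).
Definition Cone : Cpx := (1, 0).
Definition Cconj (a : Cpx) : Cpx := (fst a, - snd a).
Definition Cabs (a : Cpx) : R := sqrt (fst a * fst a + snd a * snd a).

Record CstarAlg := {
  cs_car :> Type;
  cs_zero : cs_car;
  cs_one : cs_car;
  cs_add : cs_car -> cs_car -> cs_car;
  cs_opp : cs_car -> cs_car;
  cs_mul : cs_car -> cs_car -> cs_car;
  cs_smul : Cpx -> cs_car -> cs_car;
  cs_star : cs_car -> cs_car;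
  cs_norm : cs_car -> R;
  cs_addA : forall x y z, cs_add x (cs_add y z) = cs_add (cs_add x y) z;
  cs_addC : forall x y, cs_add x y = cs_add y x;
  cs_add0 : forall x, cs_add cs_zero x = x;
  cs_addN : forall x, cs_add (cs_opp x) x = cs_zero;
  cs_mulA : forall x y z, cs_mul x (cs_mul y z) = cs_mul (cs_mul x y) z;
  cs_mul1l : forall x, cs_mul cs_one x = x;
  cs_mul1r : forall x, cs_mul x cs_one = x;
  cs_mulDl : forall x y z, cs_mul (cs_add x y) z = cs_add (cs_mul x z) (cs_mul y z);
  cs_mulDr : forall x y z, cs_mul x (cs_add y z) = cs_add (cs_mul x y) (cs_mul x z);
  cs_smulDr : forall a x y, cs_smul a (cs_add x y) = cs_add (cs_smul a x) (cs_smul a y);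
  cs_smulDl : forall a b x, cs_smul (Cadd a b) x = cs_add (cs_smul a x) (cs_smul b x);
  cs_smulA : forall a b x, cs_smul (Cmul a b) x = cs_smul a (cs_smul b x);
  cs_smul1 : forall x, cs_smul Cone x = x;
  cs_smulMl : forall a x y, cs_smul a (cs_mul x y) = cs_mul (cs_smul a x) y;
  cs_smulMr : forall a x y, cs_smul a (cs_mul x y) = cs_mul x (cs_smul a y);
  cs_starK : forall x, cs_star (cs_star x) = x;
  cs_starD : forall x y, cs_star (cs_add x y) = cs_add (cs_star x) (cs_star y);
  cs_starM : forall x y, cs_star (cs_mul x y) = cs_mul (cs_star y) (cs_star x);
  cs_starZ : forall a x, cs_star (cs_smul a x) = cs_smul (Cconj a) (cs_star x);
  cs_norm_eq0 : forall x, cs_norm x = 0 -> x = cs_zero;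
  cs_normD : forall x y, cs_norm (cs_add x y) <= cs_norm x + cs_norm y;
  cs_normZ : forall a x, cs_norm (cs_smul a x) = Cabs a * cs_norm x;
  cs_normM : forall x y, cs_norm (cs_mul x y) <= cs_norm x * cs_norm y;
  cs_normC : forall x, cs_norm (cs_mul (cs_star x) x) = cs_norm x * cs_norm x;
  cs_complete : forall s : nat -> cs_car,
    (forall eps, 0 < eps -> exists N, forall p q, (N <= p)%nat -> (N <= q)%nat ->
        cs_norm (cs_add (s p) (cs_opp (s q))) < eps) ->
    exists L, forall eps, 0 < eps -> exists N, forall p, (N <= p)%nat ->
        cs_norm (cs_add (s p) (cs_opp L)) < eps
}.

Definition cs_sum (A : CstarAlg) (n : nat) (f : nat -> A) : A :=
  fold_right (fun i acc => cs_add A (f i) acc) (cs_zero A) (seq 0 n).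

(** * Finite simple graphs on vertex set {0,...,n-1}
    (vertex i here corresponds to vertex i+1 of the paper). *)
Definition simple_graph (n : nat) (adj : nat -> nat -> bool) : Prop :=
  (forall i j, adj i j = adj j i) /\ (forall i, adj i i = false).

Definition nbrs (n : nat) (adj : nat -> nat -> bool) (i : nat) : list nat :=
  filter (adj i) (seq 0 n).

Definition cubic (n : nat) (adj : nat -> nat -> bool) : Prop :=
  forall i, (i < n)%nat -> length (nbrs n adj i) = 3%nat.

Definition walk (n : nat) (adj : nat -> nat -> bool) (m i k : nat) : Prop :=
  exists p : nat -> nat, p 0%nat = i /\ p m = k /\
    (forall t, (t <= m)%nat -> (p t < n)%nat) /\
    (forall t, (t < m)%nat -> adj (p t) (p (S t)) = true).

Definition connected (n : nat) (adj : nat -> nat -> bool) : Prop :=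
  forall i k, (i < n)%nat -> (k < n)%nat -> exists m, walk n adj m i k.

Definition dist_eq (n : nat) (adj : nat -> nat -> bool) (i k m : nat) : Prop :=
  walk n adj m i k /\ forall m', (m' < m)%nat -> ~ walk n adj m' i k.

Definition is_cycle (n : nat) (adj : nat -> nat -> bool) (m : nat) (c : nat -> nat) : Prop :=
  (3 <= m)%nat /\
  (forall t, (t < m)%nat -> (c t < n)%nat) /\
  (forall s t, (s < m)%nat -> (t < m)%nat -> c s = c t -> s = t) /\
  (forall t, (t < m)%nat -> adj (c t) (c ((S t) mod m)) = true).

Definition girth_ge (n : nat) (adj : nat -> nat -> bool) (g : nat) : Prop :=
  forall m c, is_cycle n adj m c -> (g <= m)%nat.

Definition aut_relations (n : nat) (adj : nat -> nat -> bool)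
    (A : CstarAlg) (u : nat -> nat -> A) : Prop :=
  (forall i j, (i < n)%nat -> (j < n)%nat ->
      u i j = cs_star A (u i j) /\ u i j = cs_mul A (u i j) (u i j)) /\
  (forall i, (i < n)%nat ->
      cs_sum A n (fun l => u i l) = cs_one A /\ cs_sum A n (fun l => u l i) = cs_one A) /\
  (forall i j k l, (i < n)%nat -> (j < n)%nat -> (k < n)%nat -> (l < n)%nat ->
      xorb (adj i k) (adj j l) = true ->
      cs_mul A (u i j) (u k l) = cs_zero A /\ cs_mul A (u k l) (u i j) = cs_zero A).

(* Main.v *)
Require Import Defs.
From Stdlib Require Import Reals List Arith Lia Lra.
Import ListNotations.

Definition lsum (A : CstarAlg) (l : list nat) (f : nat -> A) : A :=
  fold_right (fun i acc => cs_add A (f i) acc) (cs_zero A) l.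

Lemma add0r (A : CstarAlg) (x : A) : cs_add A x (cs_zero A) = x.
Proof. rewrite cs_addC. apply cs_add0. Qed.

Lemma addcancel (A : CstarAlg) (a x : A) : cs_add A x a = x -> a = cs_zero A.
Proof.
  intros H.
  assert (H2 : cs_add A (cs_opp A x) (cs_add A x a) = cs_add A (cs_opp A x) x) by now rewrite H.
  rewrite cs_addA, cs_addN, cs_add0 in H2. exact H2.
Qed.

Lemma mul0l (A : CstarAlg) (x : A) : cs_mul A (cs_zero A) x = cs_zero A.
Proof.
  apply (addcancel A _ (cs_mul A (cs_zero A) x)).
  rewrite <- cs_mulDl, cs_add0. reflexivity.
Qed.

Lemma mul0r (A : CstarAlg) (x : A) : cs_mul A x (cs_zero A) = cs_zero A.
Proof.
  apply (addcancel A _ (cs_mul A x (cs_zero A))).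
  rewrite <- cs_mulDr, cs_add0. reflexivity.
Qed.

Lemma smul0 (A : CstarAlg) c : cs_smul A c (cs_zero A) = cs_zero A.
Proof.
  apply (addcancel A _ (cs_smul A c (cs_zero A))).
  rewrite <- cs_smulDr, cs_add0. reflexivity.
Qed.

Lemma three_eq (A : CstarAlg) (x : A) :
  cs_add A x (cs_add A x (cs_add A x (cs_zero A))) = x -> x = cs_zero A.
Proof.
  intros H. rewrite add0r, cs_addA, cs_addC in H.
  apply addcancel in H.
  rewrite <- (cs_smul1 A x).
  assert (Hc : Cone = Cadd (/2, 0) (/2, 0)).
  { unfold Cone, Cadd; simpl. f_equal; field. }
  rewrite Hc, cs_smulDl, <- cs_smulDr, H. apply smul0.
Qed.

Lemma mid0 (A : CstarAlg) (x a b : A) : cs_mul A a b = cs_zero A ->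
  cs_mul A (cs_mul A x a) b = cs_zero A.
Proof. intros H. rewrite <- cs_mulA, H. apply mul0r. Qed.

Lemma lsum_mull (A : CstarAlg) (x : A) l f :
  cs_mul A x (lsum A l f) = lsum A l (fun t => cs_mul A x (f t)).
Proof. induction l; simpl. apply mul0r. rewrite cs_mulDr, IHl. reflexivity. Qed.

Lemma lsum_mulr (A : CstarAlg) (x : A) l f :
  cs_mul A (lsum A l f) x = lsum A l (fun t => cs_mul A (f t) x).
Proof. induction l; simpl. apply mul0l. rewrite cs_mulDl, IHl. reflexivity. Qed.

Lemma lsum_zero (A : CstarAlg) l (f : nat -> A) :
  (forall t, In t l -> f t = cs_zero A) -> lsum A l f = cs_zero A.
Proof.
  induction l; simpl; intros H; auto.
  rewrite H, IHl; auto. apply cs_add0.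
Qed.

Lemma lsum_single (A : CstarAlg) l (f : nat -> A) t0 :
  NoDup l -> In t0 l -> (forall t, In t l -> t <> t0 -> f t = cs_zero A) ->
  lsum A l f = f t0.
Proof.
  induction l as [|a l IH]; simpl; intros Hn Hi H. contradiction.
  inversion Hn; subst.
  destruct (Nat.eq_dec a t0) as [->|Hne].
  - rewrite lsum_zero. apply add0r. intros t Ht. apply H; auto.
    intros ->. contradiction.
  - rewrite H, cs_add0; auto. apply IH; auto. destruct Hi; [contradiction|auto].
Qed.

Lemma add4 (A : CstarAlg) (a b c d : A) :
  cs_add A (cs_add A a b) (cs_add A c d) = cs_add A (cs_add A a c) (cs_add A b d).
Proof.
  rewrite <- !cs_addA. f_equal. rewrite !cs_addA. f_equal. apply cs_addC.
Qed.

Lemma lsum_add (A : CstarAlg) l (f g : nat -> A) :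
  lsum A l (fun t => cs_add A (f t) (g t)) = cs_add A (lsum A l f) (lsum A l g).
Proof.
  induction l; simpl. symmetry; apply cs_add0.
  rewrite IHl. apply add4.
Qed.

Lemma lsum_ext (A : CstarAlg) l (f g : nat -> A) :
  (forall t, In t l -> f t = g t) -> lsum A l f = lsum A l g.
Proof. induction l; simpl; intros H; auto. rewrite H, IHl; auto. Qed.

Lemma lsum_three (A : CstarAlg) l (f : nat -> A) a b c :
  NoDup l -> In a l -> In b l -> In c l -> a <> b -> a <> c -> b <> c ->
  (forall t, In t l -> t <> a -> t <> b -> t <> c -> f t = cs_zero A) ->
  lsum A l f = cs_add A (f a) (cs_add A (f b) (f c)).
Proof.
  intros Hn Ha Hb Hc Hab Hac Hbc H.
  rewrite (lsum_ext A l f (fun t => cs_add A (if Nat.eq_dec t a then f t else cs_zero A)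
     (cs_add A (if Nat.eq_dec t b then f t else cs_zero A) (if Nat.eq_dec t c then f t else cs_zero A)))).
  - rewrite !lsum_add.
    rewrite (lsum_single A l _ a), (lsum_single A l _ b), (lsum_single A l _ c); auto.
    + destruct (Nat.eq_dec a a), (Nat.eq_dec b b), (Nat.eq_dec c c); congruence.
    + intros t _ Ht; destruct (Nat.eq_dec t c); congruence.
    + intros t _ Ht; destruct (Nat.eq_dec t b); congruence.
    + intros t _ Ht; destruct (Nat.eq_dec t a); congruence.
  - intros t Ht.
    destruct (Nat.eq_dec t a); destruct (Nat.eq_dec t b); destruct (Nat.eq_dec t c);
      subst; try congruence; rewrite ?cs_add0, ?add0r; auto.
Qed.

Lemma star_mul3 (A : CstarAlg) (a b c : A) :
  cs_star A (cs_mul A (cs_mul A a b) c) = cs_mul A (cs_mul A (cs_star A c) (cs_star A b)) (cs_star A a).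
Proof. rewrite !cs_starM, cs_mulA. reflexivity. Qed.

Open Scope nat_scope.

Local Notation "x ** y" := (cs_mul _ x y) (at level 40, left associativity).

Lemma R3z n adj A u (Hu : aut_relations n adj A u) a b c d :
  a < n -> b < n -> c < n -> d < n -> adj a c <> adj b d -> u a b ** u c d = cs_zero A.
Proof.
  intros. destruct Hu as [_ [_ R3]]. apply (R3 a b c d); auto.
  destruct (adj a c), (adj b d); simpl; auto; congruence.
Qed.

Lemma girth4 n adj (Hs : simple_graph n adj) (Hg : girth_ge n adj 5) x y a b :
  x < n -> y < n -> a < n -> b < n -> adj x a = true -> adj a y = true ->
  adj x b = true -> adj b y = true -> x <> y -> a <> b -> False.
Proof.
  intros Hx Hy Ha Hb H1 H2 H3 H4 Hxy Hab. destruct Hs as [Hsym Hirr].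
  assert (xa : x <> a) by (intros ->; congruence).
  assert (xb : x <> b) by (intros ->; congruence).
  assert (ay : a <> y) by (intros ->; congruence).
  assert (yb : b <> y) by (intros ->; congruence).
  set (c := fun t => match t with 0 => x | 1 => a | 2 => y | _ => b end).
  assert (H := Hg 4 c). cut (5 <= 4); [lia|]. apply H.
  split; [lia|]. split; [|split].
  - intros t Ht. destruct t as [|[|[|[|]]]]; simpl; auto; lia.
  - intros s t Hs' Ht' E.
    destruct s as [|[|[|[|s]]]]; destruct t as [|[|[|[|t]]]]; simpl in E; try lia; congruence.
  - intros t Ht. destruct t as [|[|[|[|]]]]; simpl; auto; try lia.
    rewrite Hsym; auto. rewrite Hsym; auto.
Qed.

Lemma ins_sum n adj A u (Hu : aut_relations n adj A u) v (x y : A) :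
  v < n -> x ** y = lsum A (seq 0 n) (fun c => x ** (u v c ** y)).
Proof.
  intros Hv. destruct Hu as [_ [R2 _]]. destruct (R2 v Hv) as [E _].
  rewrite <- (cs_mul1l A y) at 1. rewrite <- E.
  change (cs_sum A n (fun l => u v l)) with (lsum A (seq 0 n) (fun l => u v l)).
  rewrite lsum_mulr, lsum_mull. reflexivity.
Qed.

Lemma ins n adj A u (Hu : aut_relations n adj A u) v (x y : A) c0 :
  v < n -> c0 < n -> (forall c, c < n -> c <> c0 -> x ** (u v c ** y) = cs_zero A) ->
  x ** y = x ** (u v c0 ** y).
Proof.
  intros Hv Hc H. rewrite (ins_sum n adj A u Hu v x y Hv).
  apply (lsum_single A _ (fun c => x ** (u v c ** y)) c0). apply seq_NoDup. apply in_seq; lia.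
  intros t Ht. apply in_seq in Ht. intros; apply H; auto; lia.
Qed.

Lemma ins0 n adj A u (Hu : aut_relations n adj A u) v (x y : A) :
  v < n -> (forall c, c < n -> x ** (u v c ** y) = cs_zero A) ->
  x ** y = cs_zero A.
Proof.
  intros Hv H. rewrite (ins_sum n adj A u Hu v x y Hv).
  apply lsum_zero. intros t Ht. apply in_seq in Ht. apply H; lia.
Qed.

Lemma zl (A : CstarAlg) (x a b : A) : a ** b = cs_zero A -> x ** (a ** b) = cs_zero A.
Proof. intros H; rewrite H; apply mul0r. Qed.
Lemma zr (A : CstarAlg) (x a b : A) : a ** x = cs_zero A -> a ** (x ** b) = cs_zero A.
Proof. intros H; rewrite cs_mulA, H; apply mul0l. Qed.

Lemma common n adj A u (Hs : simple_graph n adj) (Hg : girth_ge n adj 5)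
  (Hu : aut_relations n adj A u) i j k l v c0 :
  i < n -> j < n -> k < n -> l < n -> v < n -> c0 < n ->
  adj i v = true -> adj v k = true -> j <> l -> adj j c0 = true -> adj c0 l = true ->
  u i j ** u k l = u i j ** (u v c0 ** u k l).
Proof.
  intros. apply (ins n adj A u Hu); auto.
  intros c Hc Hne. destruct (adj j c) eqn:E1.
  - destruct (adj c l) eqn:E2.
    + exfalso. apply (girth4 n adj Hs Hg j l c0 c); auto.
    + apply zl. apply (R3z n adj A u Hu); auto; congruence.
  - apply zr. apply (R3z n adj A u Hu); auto; congruence.
Qed.

Lemma lsum_filter (A : CstarAlg) l (p : nat -> bool) (f : nat -> A) :
  (forall t, In t l -> p t = false -> f t = cs_zero A) -> lsum A l f = lsum A (filter p l) f.
Proof.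
  induction l; simpl; intros H; auto.
  destruct (p a) eqn:E; simpl; rewrite IHl; auto.
  rewrite H, cs_add0; auto.
Qed.

Lemma orth_row n adj A u (Hs : simple_graph n adj) (Hc : cubic n adj) (Hg : girth_ge n adj 5)
  (Hu : aut_relations n adj A u) i j b :
  i < n -> j < n -> b < n -> j <> b -> u i j ** u i b = cs_zero A.
Proof.
  intros Hi Hj Hb Hjb. pose proof Hs as [Hsym Hirr].
  destruct (adj j b) eqn:Ejb.
  { apply (R3z n adj A u Hu); auto. rewrite Hirr; congruence. }
  assert (Hnb := Hc i Hi).
  destruct (nbrs n adj i) as [|a1 [|a2 [|a3 [|]]]] eqn:En; simpl in Hnb; try lia.
  assert (Hin : forall a, In a [a1;a2;a3] -> a < n /\ adj i a = true).
  { intros a Ha. rewrite <- En in Ha. unfold nbrs in Ha. apply filter_In in Ha.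
    destruct Ha as [Ha1 Ha2]. apply in_seq in Ha1. split; auto; lia. }
  destruct (existsb (fun c => andb (adj j c) (adj c b)) (seq 0 n)) eqn:Ex.
  - apply existsb_exists in Ex. destruct Ex as [c0 [Hc0 Hc0']].
    apply in_seq in Hc0. apply andb_prop in Hc0'. destruct Hc0' as [E1 E2].
    set (X := u i j ** u i b).
    assert (Hv : forall v, In v [a1;a2;a3] -> u i j ** (u v c0 ** u i b) = X).
    { intros v Hv. destruct (Hin v Hv). symmetry. apply (common n adj A u Hs Hg Hu); auto; try lia.
      rewrite Hsym; auto. }
    apply three_eq.
    assert (E : X = lsum A (seq 0 n) (fun a => u i j ** (u a c0 ** u i b))).
    { unfold X. destruct Hu as [R1 [R2 R3]]. destruct (R2 c0 ltac:(lia)) as [_ E].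
      rewrite <- (cs_mul1r A (u i j)) at 1. rewrite <- E.
      change (cs_sum A n (fun l => u l c0)) with (lsum A (seq 0 n) (fun l => u l c0)).
      rewrite lsum_mull, lsum_mulr. apply lsum_ext. intros. rewrite cs_mulA. reflexivity. }
    rewrite (lsum_filter A _ (adj i)) in E.
    2:{ intros t Ht Ef. apply in_seq in Ht. apply zr. apply (R3z n adj A u Hu); auto; try lia. congruence. }
    change (filter (adj i) (seq 0 n)) with (nbrs n adj i) in E. rewrite En in E.
    simpl in E. rewrite !Hv in E by (simpl; auto). symmetry; exact E.
  - apply (ins0 n adj A u Hu a1). apply Hin; simpl; auto.
    intros c Hcn. destruct (Hin a1) as [Ha1 Ha1']; simpl; auto.
    destruct (adj j c) eqn:E1.
    + destruct (adj c b) eqn:E2.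
      * exfalso. assert (existsb (fun c => andb (adj j c) (adj c b)) (seq 0 n) = true).
        { apply existsb_exists. exists c. rewrite in_seq, E1, E2. split; auto; lia. }
        congruence.
      * apply zl. apply (R3z n adj A u Hu); auto. rewrite Hsym; congruence.
    + apply zr. apply (R3z n adj A u Hu); auto. congruence.
Qed.

Lemma transp n adj A u (Hu : aut_relations n adj A u) :
  aut_relations n adj A (fun a b => u b a).
Proof.
  destruct Hu as [R1 [R2 R3]]. split; [|split].
  - intros; apply R1; auto.
  - intros i Hi; destruct (R2 i Hi); split; auto.
  - intros i j k l Hi Hj Hk Hl X. apply R3; auto. rewrite Bool.xorb_comm; auto.
Qed.

Lemma orth_col n adj A u (Hs : simple_graph n adj) (Hc : cubic n adj) (Hg : girth_ge n adj 5)
  (Hu : aut_relations n adj A u) i a j :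
  i < n -> a < n -> j < n -> i <> a -> u i j ** u a j = cs_zero A.
Proof.
  intros. exact (orth_row n adj A (fun a b => u b a) Hs Hc Hg (transp n adj A u Hu) j i a
    ltac:(auto) ltac:(auto) ltac:(auto) ltac:(auto)).
Qed.

Local Notation "x ** y" := (cs_mul _ x y) (at level 40, left associativity).

Lemma adj_comm n adj A u (Hs : simple_graph n adj) (Hc : cubic n adj) (Hg : girth_ge n adj 5)
  (Hu : aut_relations n adj A u) i j p q :
  i < n -> j < n -> p < n -> q < n -> adj i p = true -> adj j q = true ->
  u i j ** u p q = u p q ** u i j.
Proof.
  intros Hi Hj Hp Hq Hip Hjq. pose proof Hs as [Hsym Hirr].
  assert (E : u i j ** u p q = u i j ** u p q ** u i j).
  { rewrite <- (cs_mul1r A (u i j ** u p q)) at 1.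
    rewrite (ins n adj A u Hu i (u i j ** u p q) (cs_one A) j); auto.
    - rewrite cs_mul1r. reflexivity.
    - intros c Hcn Hne. rewrite cs_mul1r. destruct (adj q c) eqn:Eq.
      + rewrite <- cs_mulA. rewrite <- (common n adj A u Hs Hg Hu i j i c p q); auto.
        * apply (orth_row n adj A u Hs Hc Hg Hu); auto.
        * rewrite Hsym; auto.
      + apply mid0. apply (R3z n adj A u Hu); auto. rewrite Hsym, Hip; congruence. }
  destruct Hu as [R1 _].
  assert (S : cs_star A (u i j ** u p q) = u p q ** u i j).
  { rewrite cs_starM, <- (proj1 (R1 i j Hi Hj)), <- (proj1 (R1 p q Hp Hq)). reflexivity. }
  rewrite <- S. rewrite E. rewrite star_mul3, <- (proj1 (R1 i j Hi Hj)), <- (proj1 (R1 p q Hp Hq)).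
  reflexivity.
Qed.

Lemma dist2 n adj (Hs : simple_graph n adj) i k :
  i < n -> dist_eq n adj i k 2 ->
  exists p, p < n /\ adj i p = true /\ adj p k = true /\ i <> k /\ adj i k = false.
Proof.
  intros Hi [[w [w0 [w2 [Hw Ha]]]] Hmin].
  exists (w 1). split; [apply Hw; lia|]. split; [rewrite <- w0; apply Ha; lia|].
  split; [rewrite <- w2; apply Ha; lia|]. split.
  - intros ->. apply (Hmin 0); [lia|]. exists (fun _ => k). repeat split; auto; intros; lia.
  - destruct (adj i k) eqn:E; auto. exfalso. apply (Hmin 1); [lia|].
    exists (fun t => if Nat.eqb t 0 then i else k). repeat split; auto.
    + intros t Ht. destruct (Nat.eqb t 0); auto. rewrite <- w2; apply Hw; lia.
    + intros t Ht. assert (t = 0) by lia. subst. simpl. auto.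
Qed.

Lemma nbr3 n adj (Hc : cubic n adj) q j l c d :
  q < n -> j < n -> l < n -> c < n -> d < n ->
  adj q j = true -> adj q l = true -> adj q c = true -> adj q d = true ->
  j <> l -> j <> c -> l <> c -> d = j \/ d = l \/ d = c.
Proof.
  intros. destruct (Nat.eq_dec d j); auto. destruct (Nat.eq_dec d l); auto.
  destruct (Nat.eq_dec d c); auto. exfalso.
  assert (HL : length [j;l;c;d] <= length (nbrs n adj q)).
  { apply NoDup_incl_length.
    - repeat constructor; simpl; intuition congruence.
    - intros x Hx. unfold nbrs. apply filter_In. split.
      + apply in_seq. simpl in Hx; intuition subst; lia.
      + simpl in Hx; intuition subst; auto. }
  rewrite Hc in HL; auto. simpl in HL. lia.
Qed.

Lemma ins_right n adj A u (Hu : aut_relations n adj A u) v (x : A) c0 :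
  v < n -> c0 < n -> (forall c, c < n -> c <> c0 -> x ** u v c = cs_zero A) ->
  x = x ** u v c0.
Proof.
  intros Hv Hc H.
  assert (E := ins n adj A u Hu v x (cs_one A) c0 Hv Hc).
  rewrite !cs_mul1r in E. apply E. intros c Hc1 Hc2. rewrite cs_mul1r. auto.
Qed.

Local Notation "x ** y" := (cs_mul _ x y) (at level 40, left associativity).

Theorem lemma5p2 (n : nat) (adj : nat -> nat -> bool)
  (Hsimple : simple_graph n adj) (Hcubic : cubic n adj)
  (Hconn : connected n adj) (Hgirth : girth_ge n adj 5)
  (A : CstarAlg) (u : nat -> nat -> A) (Hu : aut_relations n adj A u) :
  forall i j k l, (i < n)%nat -> (j < n)%nat -> (k < n)%nat -> (l < n)%nat ->
    dist_eq n adj i k 2 -> dist_eq n adj j l 2 ->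
    cs_mul A (u i j) (u k l) = cs_mul A (u k l) (u i j).
Proof.
  intros i j k l Hi Hj Hk Hl Hik Hjl.
  pose proof Hsimple as [Hsym Hirr].
  destruct (dist2 n adj Hsimple i k Hi Hik) as [p [Hp [Hip [Hpk [Hnik Haik]]]]].
  destruct (dist2 n adj Hsimple j l Hj Hjl) as [q [Hq [Hjq [Hql [Hnjl Hajl]]]]].
  assert (Hpi : adj p i = true) by (rewrite Hsym; auto).
  assert (Hkp : adj k p = true) by (rewrite Hsym; auto).
  assert (Hqj : adj q j = true) by (rewrite Hsym; auto).
  assert (Hlq : adj l q = true) by (rewrite Hsym; auto).
  set (P := u p q).
  assert (Ckl : P ** u k l = u k l ** P).
  { symmetry. apply (adj_comm n adj A u Hsimple Hcubic Hgirth Hu); auto. }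
  assert (Comm : forall a b, a < n -> b < n -> adj a p = true -> adj b q = true ->
            P ** u a b = u a b ** P).
  { intros a b Ha Hb Hap Hbq. symmetry. apply (adj_comm n adj A u Hsimple Hcubic Hgirth Hu); auto. }
  assert (S1 : u i j ** u k l = u i j ** u k l ** P).
  { rewrite <- cs_mulA, <- Ckl. apply (common n adj A u Hsimple Hgirth Hu i j k l p q); auto. }
  assert (S2 : u i j ** u k l ** P = u i j ** u k l ** P ** u i j).
  { apply (ins_right n adj A u Hu i (u i j ** u k l ** P) j); auto.
    - intros c Hcn Hne. destruct (adj q c) eqn:Eq.
      + destruct (Nat.eq_dec c l) as [->|Hcl].
        * rewrite <- cs_mulA, (Comm i l), cs_mulA; auto.
          rewrite (mid0 A (u i j) (u k l) (u i l)). apply mul0l.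
          apply (orth_col n adj A u Hsimple Hcubic Hgirth Hu); auto.
        * rewrite <- (cs_mulA _ (u i j)), <- Ckl, cs_mulA.
          assert (Hqc : adj c q = true) by (rewrite Hsym; auto).
          assert (E3 : u i j ** P ** u i c =
             cs_add A (u i j ** P ** (u k j ** u i c))
               (cs_add A (u i j ** P ** (u k l ** u i c)) (u i j ** P ** (u k c ** u i c)))).
          { rewrite (ins_sum n adj A u Hu k (u i j ** P) (u i c)); auto.
            apply (lsum_three A _ (fun d => u i j ** P ** (u k d ** u i c))).
            - apply seq_NoDup.
            - apply in_seq; lia.
            - apply in_seq; lia.
            - apply in_seq; lia.
            - auto.
            - auto.
            - auto.
            - intros d Hd H1 H2 H3. apply in_seq in Hd.
              rewrite cs_mulA. rewrite (mid0 A (u i j) P (u k d)). apply mul0l.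
              apply (R3z n adj A u Hu); auto; try lia.
              rewrite Hpk. intros Ed. symmetry in Ed.
              destruct (nbr3 n adj Hcubic q j l c d) as [|[|]]; auto; lia. }
          assert (Z1 : u i j ** P ** u i c = cs_zero A).
          { rewrite <- cs_mulA, (Comm i c), cs_mulA; auto.
            rewrite (orth_row n adj A u Hsimple Hcubic Hgirth Hu); auto. apply mul0l. }
          assert (Z2 : u i j ** P ** (u k j ** u i c) = cs_zero A).
          { rewrite cs_mulA, <- (cs_mulA _ (u i j) P), (Comm k j), cs_mulA; auto.
            rewrite (orth_col n adj A u Hsimple Hcubic Hgirth Hu i k j); auto.
            rewrite !mul0l. reflexivity. }
          assert (Z3 : u i j ** P ** (u k c ** u i c) = cs_zero A).
          { rewrite (orth_col n adj A u Hsimple Hcubic Hgirth Hu k i c); auto. apply mul0r. }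
          rewrite Z1, Z2, Z3, cs_add0, add0r in E3.
          rewrite <- cs_mulA. symmetry. exact E3.
      + apply mid0. apply (R3z n adj A u Hu); auto. rewrite Hpi; congruence. }
  destruct Hu as [R1 _].
  assert (S : cs_star A (u i j ** u k l) = u k l ** u i j).
  { rewrite cs_starM, <- (proj1 (R1 i j Hi Hj)), <- (proj1 (R1 k l Hk Hl)). reflexivity. }
  rewrite <- S, S1, S2.
  rewrite !cs_starM, <- (proj1 (R1 i j Hi Hj)), <- (proj1 (R1 k l Hk Hl)).
  unfold P. rewrite <- (proj1 (R1 p q Hp Hq)). fold P.
  rewrite !cs_mulA, <- (cs_mulA _ (u i j) P), Ckl, cs_mulA. reflexivity.
Qed.
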